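(* In the system described in the context, there is only one installed view in the system at any time: if a view $w$ is installed in the system, then any previously installed view $v<w$ was uninstalled and will not be installed anymore.
   Context: Servers $S=\{s_1,\dots,s_n\}$ in an asynchronous crash-prone message-passing system with reliable links. Views form a sequence $v_0,v_1,\dots$ with $v_{k+1}=v_k.succ$; $v<w$ means $w$ is obtained from $v$ by applying $succ$ one or more times. Each server has a current view $s.cview$ (initially $v_0$) and a weight in each view. A weighted majority for view $v$ is a set of servers whose weights in $v$ sum to more than $n/2$. View changer run by each server $s$ with $s.cview=v$: when a local timeout for $v$ expires it sends $\langle\text{change\_view},v.succ\rangle$ to all servers; once it has received or sent change\_view for $v.succ$ it forwards it if not already sent, disables read/write operations, sends $\langle\text{state\_update},(val,ts,cid),v,w\rangle$ to all servers (its register state and weight $w$ in $v$) — at this point it has uninstalled $v$ — waits until it has state\_update messages for view $v$ whose weights sum to more than $n/2$, adopts the value with lexicographically largest $(ts,cid)$, then sets $s.cview\leftarrow v.succ$ (installs $v.succ$) and re-enables read/write operations. A view $v$ is installed in the system once at least one server installs $v$ and every server $s$ satisfies $s.cview\le v$; when $v.succ$ is installed, $v$ is said to be uninstalled from the system. *)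

(* Defs.v *)
From Stdlib Require List.
From HB Require Import structures.
From mathcomp Require Import all_boot all_order all_algebra.
Set Implicit Arguments. Unset Strict Implicit. Unset Printing Implicit Defensive.
Import Order.TTheory GRing.Theory Num.Theory.
Local Open Scope ring_scope.

Section Model.

Variable Val : Type.
(* number of servers; servers are s_1..s_n, represented by 'I_n *)
Variable n : nat.
Variable weight : 'I_n -> nat -> rat.

(* views v_0, v_1, ... are represented by their index; v.succ = v.+1,
   and v < w (as views) is v < w on nat. *)
Definition View := nat.

(* register state (val, ts, cid) *)
Definition RegState := (Val * nat * nat)%type.

Inductive Msg :=
| ChangeView (v : View)
| StateUpdate (sender : 'I_n) (r : RegState) (v : View) (w : rat).

Record LState := mkL {
  cview : View;
  reg : RegState;
  rw_enabled : bool;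
  uninstalled : bool;      (* has uninstalled cview, waiting for state updates *)
  cv_sent : bool;          (* has sent change_view for cview.succ *)
  crashed : bool;
  inbox : seq Msg
}.

Record GState := mkG {
  loc : 'I_n -> LState;
  sent : seq ('I_n * Msg)      (* messages sent so far, with destination *)
}.

Definition upd (f : 'I_n -> LState) (s : 'I_n) (x : LState) : 'I_n -> LState :=
  fun j => if j == s then x else f j.

Definition broadcast (m : Msg) : seq ('I_n * Msg) := [seq (j, m) | j <- enum 'I_n].

Definition lex_le (a b : nat * nat) : bool :=
  (a.1 < b.1)%N || ((a.1 == b.1) && (a.2 <= b.2)%N).

Definition su_of (v : View) (m : Msg) : option ('I_n * RegState * rat) :=
  match m with
  | StateUpdate q r v' w => if v' == v then Some (q, r, w) else None
  | _ => None
  end.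

Definition su_quorum (ib : seq Msg) (v : View) (Q : seq ('I_n * RegState * rat)) : Prop :=
  (forall x, List.In x Q -> exists m, List.In m ib /\ su_of v m = Some x) /\
  uniq [seq x.1.1 | x <- Q] /\
  (n%:R / 2 < \sum_(x <- Q) x.2).

Definition ts_cid (r : RegState) : nat * nat := (r.1.2, r.2).

Inductive step : GState -> GState -> Prop :=
| StepDeliver g d m :
    List.In (d, m) (sent g) ->
    step g (mkG (upd (loc g) d
                  (let l := loc g d in
                   mkL (cview l) (reg l) (rw_enabled l) (uninstalled l) (cv_sent l)
                       (crashed l) (rcons (inbox l) m)))
                (sent g))
| StepCrash g s :
    let l := loc g s in
    step g (mkG (upd (loc g) s
                  (mkL (cview l) (reg l) (rw_enabled l) (uninstalled l) (cv_sent l)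
                       true (inbox l)))
                (sent g))
(* read/write operations (over-approximated): while enabled, they may
   change the register state arbitrarily *)
| StepRW g s r :
    let l := loc g s in
    ~~ crashed l -> rw_enabled l ->
    step g (mkG (upd (loc g) s
                  (mkL (cview l) r (rw_enabled l) (uninstalled l) (cv_sent l)
                       (crashed l) (inbox l)))
                (sent g))
| StepTimeout g s :
    let l := loc g s in
    ~~ crashed l -> ~~ uninstalled l -> ~~ cv_sent l ->
    step g (mkG (upd (loc g) s
                  (mkL (cview l) (reg l) (rw_enabled l) (uninstalled l) true
                       (crashed l) (inbox l)))
                (sent g ++ broadcast (ChangeView (cview l).+1)))
| StepUninstall g s :
    let l := loc g s in
    ~~ crashed l -> ~~ uninstalled l ->
    (cv_sent l \/ List.In (ChangeView (cview l).+1) (inbox l)) ->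
    step g (mkG (upd (loc g) s
                  (mkL (cview l) (reg l) false true true (crashed l) (inbox l)))
                (sent g ++ (if cv_sent l then [::]
                            else broadcast (ChangeView (cview l).+1))
                        ++ broadcast (StateUpdate s (reg l) (cview l)
                                                  (weight s (cview l)))))
| StepInstall g s Q x :
    let l := loc g s in
    ~~ crashed l -> uninstalled l ->
    su_quorum (inbox l) (cview l) Q ->
    List.In x Q ->
    (forall y, List.In y Q -> lex_le (ts_cid y.1.2) (ts_cid x.1.2)) ->
    step g (mkG (upd (loc g) s
                  (mkL (cview l).+1 x.1.2 true false false (crashed l) (inbox l)))
                (sent g)).

Definition initial (g : GState) : Prop :=
  (exists r0 : 'I_n -> RegState,
     forall s, loc g s = mkL 0 (r0 s) true false false false [::]) /\
  sent g = [::].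

Definition valid_execution (exec : nat -> GState) : Prop :=
  initial (exec 0) /\
  forall t, step (exec t) (exec t.+1) \/ exec t.+1 = exec t.

End Model.

Definition sys_installed (Val : Type) (n : nat) (exec : nat -> GState Val n)
    (t : nat) (v : View) : Prop :=
  (exists (s : 'I_n) (t0 : nat), (t0 <= t)%N /\ cview (loc (exec t0) s) = v) /\
  (forall s : 'I_n, (cview (loc (exec t) s) <= v)%N).

Definition sys_uninstalled (Val : Type) (n : nat) (exec : nat -> GState Val n)
    (t : nat) (v : View) : Prop :=
  exists t1, (t1 <= t)%N /\ sys_installed exec t1 v.+1.

(* Main.v *)
Require Import Defs.
From mathcomp Require Import all_boot all_order all_algebra.

Lemma step_cv Val n weight (g g' : GState Val n) : step weight g g' ->
  forall j, (cview (loc g j) <= cview (loc g' j) <= (cview (loc g j)).+1)%N.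
Proof.
case => {g g'} /=; intros; rewrite /upd; case: eqP => [->|] /=;
  by rewrite ?leqnn ?leqnSn.
Qed.

Lemma exec_cv {Val n weight} {exec : nat -> GState Val n} :
  valid_execution weight exec -> forall t j,
  (cview (loc (exec t) j) <= cview (loc (exec t.+1) j) <= (cview (loc (exec t) j)).+1)%N.
Proof.
move=> [_ H] t j; case: (H t) => [/step_cv //|->]; by rewrite leqnn leqnSn.
Qed.

Lemma exec_mono {Val n weight} {exec : nat -> GState Val n} :
  valid_execution weight exec -> forall t1 t2 j, (t1 <= t2)%N ->
  (cview (loc (exec t1) j) <= cview (loc (exec t2) j))%N.
Proof.
move=> V t1 t2 j /subnKC <-; elim: (t2 - t1)%N => [|k IH]; first by rewrite addn0.
rewrite addnS; apply: leq_trans IH _; by case/andP: (exec_cv V (t1 + k) j).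
Qed.

Theorem lemma2 (Val : Type) (n : nat) (weight : 'I_n -> nat -> rat)
    (exec : nat -> GState Val n) :
  valid_execution weight exec ->
  forall (t : nat) (w : View), sys_installed exec t w ->
  forall (v t0 : nat), (v < w)%N -> (t0 <= t)%N -> sys_installed exec t0 v ->
    sys_uninstalled exec t v /\
    (forall t', (t <= t')%N -> ~ sys_installed exec t' v).
Proof.
move=> V t w [[s [ts [Hts Hs]]] Hall] v t0 Hvw _ _; split; last first.
  move=> t' Htt' [_ H]; have := H s.
  have := exec_mono V _ _ s (leq_trans Hts Htt'); rewrite Hs => H1 H2.
  by have := leq_trans H1 H2; rewrite leqNgt Hvw.
pose P := fun u => [exists j, (v < cview (loc (exec u) j))%N].
have exP : exists u, P u by exists ts; apply/existsP; exists s; rewrite Hs.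
have minP := ex_minnP exP; case: minP => t1 /existsP [j Hj] Hmin.
have Ht1 : (t1 <= ts)%N by apply: Hmin; apply/existsP; exists s; rewrite Hs.
exists t1; split; first exact: leq_trans Ht1 Hts.
case: t1 Hj Hmin Ht1 => [|t1] Hj Hmin Ht1.
  by move: Hj; case: (V) => [[[r0 Hr0] _] _]; rewrite Hr0.
have Hprev : forall k, (cview (loc (exec t1) k) <= v)%N.
  move=> k; rewrite leqNgt; apply/negP => Hk.
  have : (t1.+1 <= t1)%N by apply: Hmin; apply/existsP; exists k.
  by rewrite ltnn.
have Hb : forall k, (cview (loc (exec t1.+1) k) <= v.+1)%N.
  move=> k; case/andP: (exec_cv V t1 k) => _ H; apply: leq_trans H _; rewrite ltnS; exact: Hprev.
split; last exact: Hb.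
exists j, t1.+1; split => //; apply/eqP; by rewrite eqn_leq Hb Hj.
Qed.
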